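(* For every integer $k\ge1$ large enough, with $h=1/k$, the zero solution of the difference equation with variable delay $$\zeta_h(n+1)=\zeta_h(n)-\Big\{h-\frac{\cos((n+1)h)-\cos(nh)}{3}\Big\}\,\zeta_h\Big(n-\Big\lfloor\frac{|\cos(nh)|}{h}\Big\rfloor\Big),\qquad n\ge0,$$ (with initial values $\zeta_h(n)$ prescribed for $n=-k,\dots,0$) is uniformly asymptotically stable. Moreover, its solutions with $\zeta_h(n)=\varphi(nh)$, $n=-k,\dots,0$, approximate the solution of $x'(t)=-\big[1+\tfrac{\sin t}{3}\big]x(t-|\cos t|)$, $x=\varphi$ on $[-1,0]$, in the sense that $|x(t)-\zeta_h(\lfloor t/h\rfloor)|\to0$ as $h\to0$ for each $t>0$.
   Context: Here $\varphi\in C([-1,0],\mathbb R)$. The coefficient satisfies $\int_{nh}^{(n+1)h}\big(1+\tfrac{\sin s}{3}\big)ds=h-\frac{\cos((n+1)h)-\cos(nh)}{3}$, so the equation is the piecewise-constant-argument discretization of $x'(t)=-a(t)x(t-r(t))$ with $a(t)=1+\frac{\sin t}{3}$, $r(t)=|\cos t|$, $q=1$. Uniform asymptotic stability of the zero solution of a delay difference equation means uniform stability together with uniform attractivity with respect to the initial time. *)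

(* Defs.v *)
From Stdlib Require Import Reals Lra Lia ZArith.
Open Scope R_scope.

Definition hstep (k : nat) : R := 1 / INR k.

(* floor on R: Int_part x = up x - 1 is the floor of x. *)
Definition floorZ (x : R) : Z := Int_part x.

Definition coef (k : nat) (n : Z) : R :=
  hstep k - (cos (IZR (n + 1) * hstep k) - cos (IZR n * hstep k)) / 3.

Definition delay (k : nat) (n : Z) : Z :=
  floorZ (Rabs (cos (IZR n * hstep k)) / hstep k).

Definition is_sol (k : nat) (n0 : Z) (zeta : Z -> R) : Prop :=
  forall n : Z, (n0 <= n)%Z ->
    zeta (n + 1)%Z = zeta n - coef k n * zeta (n - delay k n)%Z.

Definition init_small (k : nat) (n0 : Z) (zeta : Z -> R) (d : R) : Prop :=
  forall j : Z, (n0 - Z.of_nat k <= j <= n0)%Z -> Rabs (zeta j) < d.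

Definition unif_stable (k : nat) : Prop :=
  forall eps, 0 < eps -> exists delta, 0 < delta /\
    forall (n0 : Z) (zeta : Z -> R), (0 <= n0)%Z ->
      is_sol k n0 zeta -> init_small k n0 zeta delta ->
      forall n, (n0 <= n)%Z -> Rabs (zeta n) < eps.

Definition unif_attractive (k : nat) : Prop :=
  exists eta, 0 < eta /\
    forall eps, 0 < eps -> exists N : nat,
      forall (n0 : Z) (zeta : Z -> R), (0 <= n0)%Z ->
        is_sol k n0 zeta -> init_small k n0 zeta eta ->
        forall n, (n0 + Z.of_nat N <= n)%Z -> Rabs (zeta n) < eps.

Definition unif_asympt_stable (k : nat) : Prop :=
  unif_stable k /\ unif_attractive k.

Definition cont_on_m10 (phi : R -> R) : Prop :=
  forall t, -1 <= t <= 0 -> forall eps, 0 < eps -> exists delta, 0 < delta /\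
    forall s, -1 <= s <= 0 -> Rabs (s - t) < delta -> Rabs (phi s - phi t) < eps.

Definition is_dde_sol (phi x : R -> R) : Prop :=
  (forall t, -1 <= t <= 0 -> x t = phi t) /\
  (forall eps, 0 < eps -> exists delta, 0 < delta /\
     forall t, 0 <= t < delta -> Rabs (x t - x 0) < eps) /\
  (forall t, 0 < t ->
     derivable_pt_lim x t (- (1 + sin t / 3) * x (t - Rabs (cos t)))).

(* Main.v *)
Require Import Defs.
From Stdlib Require Import Reals Lra Lia ZArith.
From Coquelicot Require Coquelicot.
Open Scope R_scope.

Lemma Rabs_sin_le (u : R) : Rabs (sin u) <= Rabs u.
Proof.
  assert (H: forall v, 0 <= v -> Rabs (sin v) <= v).
  { intros v Hv. destruct (Req_dec v 0) as [->|Hne].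
    - rewrite sin_0, Rabs_R0; lra.
    - assert (Hp : 0 < v) by lra.
      pose proof (sin_lt_x v Hp).
      destruct (Rle_dec v 1).
      + assert (0 <= sin v).
        { apply sin_ge_0; [lra|]. pose proof PI2_1. lra. }
        rewrite Rabs_right; lra.
      + pose proof (SIN_bound v). apply Rabs_le; lra. }
  destruct (Rle_dec 0 u).
  - rewrite (Rabs_right u) by lra. apply H; lra.
  - assert (Hu: 0 <= -u) by lra. pose proof (H (-u) Hu) as H2. rewrite sin_neg, Rabs_Ropp in H2.
    rewrite (Rabs_left u) by lra. lra.
Qed.

Lemma cos_lip (p q : R) : Rabs (cos p - cos q) <= Rabs (p - q).
Proof.
  rewrite form2.
  rewrite !Rabs_mult.
  pose proof (Rabs_sin_le ((p - q) / 2)).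
  pose proof (SIN_bound ((p + q) / 2)).
  assert (Rabs (sin ((p + q) / 2)) <= 1) by (apply Rabs_le; lra).
  replace (Rabs (-2)) with 2 by (unfold Rabs; destruct Rcase_abs; lra).
  assert (Rabs ((p - q) / 2) = Rabs (p - q) / 2).
  { unfold Rdiv. rewrite Rabs_mult, (Rabs_right (/2)) by lra. reflexivity. }
  pose proof (Rabs_pos (sin ((p - q) / 2))).
  pose proof (Rabs_pos (sin ((p + q) / 2))).
  nra.
Qed.

Definition good (k : nat) (c : Z -> R) (d : Z -> Z) (S : Z -> R) : Prop :=
  (32 <= k)%nat /\
  (forall j, c j = S (j + 1)%Z - S j) /\
  (forall a b, (a <= b)%Z ->
     2 / 3 * IZR (b - a) * hstep k <= S b - S a <= 4 / 3 * IZR (b - a) * hstep k) /\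
  (forall j, (0 <= d j <= Z.of_nat k)%Z).

Definition sol (c : Z -> R) (d : Z -> Z) (n0 : Z) (z : Z -> R) : Prop :=
  forall n, (n0 <= n)%Z -> z (n + 1)%Z = z n - c n * z (n - d n)%Z.

Definition G (u : R) : R := u - (Rmax 0 (u - 5/12)) ^ 2 / 2.

Lemma G_concave a b : a <= b -> G a + (b - a) * Rmin 1 (17/12 - b) <= G b.
Proof.
  intros Hab. unfold G, Rmax, Rmin.
  repeat destruct Rle_dec; nra.
Qed.

Lemma G_le u : G u <= 11/12.
Proof. unfold G, Rmax. pose proof (pow2_ge_0 (u - 17/12)). destruct Rle_dec; nra. Qed.

Lemma G_0 : G 0 = 0.
Proof. unfold G, Rmax. destruct Rle_dec; lra. Qed.

Lemma hstep_facts k : (32 <= k)%nat ->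
  0 < hstep k /\ INR k * hstep k = 1 /\ hstep k <= 1/32.
Proof.
  intros Hk. assert (H32: 32 <= INR k).
  { replace 32 with (INR 32) by (simpl; lra). apply le_INR; lia. }
  unfold hstep. repeat split.
  - apply Rdiv_lt_0_compat; lra.
  - field. lra.
  - apply Rmult_le_reg_l with (INR k); [lra|]. field_simplify; [|lra]. lra.
Qed.

Lemma good_c k c d S j : good k c d S ->
  2/3 * hstep k <= c j <= 4/3 * hstep k.
Proof.
  intros (Hk & Hc & HS & Hd). rewrite Hc.
  pose proof (HS j (j+1)%Z ltac:(lia)) as H.
  replace (j + 1 - j)%Z with 1%Z in H by lia. lra.
Qed.

Lemma good_S_mono k c d S a b : good k c d S -> (a <= b)%Z -> S a <= S b.
Proof.
  intros (Hk & Hc & HS & Hd) Hab. pose proof (hstep_facts k Hk).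
  pose proof (HS a b Hab). assert (0 <= IZR (b - a)) by (apply IZR_le; lia). nra.
Qed.

Lemma good_S_up k c d S a b : good k c d S -> (a <= b)%Z ->
  S b - S a <= 4/3 * IZR (b - a) * hstep k.
Proof. intros (Hk & Hc & HS & Hd) Hab. apply (HS a b Hab). Qed.

Lemma window_bound k : (32 <= k)%nat -> 4/3 * IZR (Z.of_nat k + 2) * hstep k <= 17/12.
Proof.
  intros Hk. destruct (hstep_facts k Hk) as (H0 & H1 & H2).
  rewrite plus_IZR, <- INR_IZR_INZ. nra.
Qed.

Lemma crossing (z : Z -> R) (a : Z) (t : nat) :
  z a <= 0 -> 0 < z (a + Z.of_nat t)%Z ->
  exists p, (a < p <= a + Z.of_nat t)%Z /\ z (p - 1)%Z <= 0 /\
    forall i, (p <= i <= a + Z.of_nat t)%Z -> 0 < z i.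
Proof.
  induction t as [|t IH]; intros Ha Hb.
  - replace (a + Z.of_nat 0)%Z with a in Hb by lia. lra.
  - destruct (Rle_dec (z (a + Z.of_nat t)%Z) 0) as [Hle|Hlt].
    + exists (a + Z.of_nat (S t))%Z. split; [lia|]. split.
      * replace (a + Z.of_nat (S t) - 1)%Z with (a + Z.of_nat t)%Z by lia. exact Hle.
      * intros i Hi. replace i with (a + Z.of_nat (S t))%Z by lia. exact Hb.
    + destruct (IH Ha ltac:(lra)) as (p & Hp1 & Hp2 & Hp3).
      exists p. split; [lia|]. split; [exact Hp2|].
      intros i Hi. destruct (Z.eq_dec i (a + Z.of_nat (S t))%Z) as [->|Hne].
      * exact Hb.
      * apply Hp3. lia.
Qed.

Lemma abs_lb x B : Rabs x <= B -> - B <= x /\ x <= B.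
Proof. intros H. pose proof (Rle_abs x). pose proof (Rle_abs (-x)). rewrite Rabs_Ropp in *. lra. Qed.

Lemma back k c d W z n0 B n p : good k c d W -> sol c d n0 z -> 0 < z p -> (p <= n)%Z ->
  (forall j, (n0 - Z.of_nat k <= j <= n)%Z -> Rabs (z j) <= B) ->
  forall t : nat, (n0 <= p - Z.of_nat t)%Z -> z (p - Z.of_nat t)%Z >= - B * (W p - W (p - Z.of_nat t)%Z).
Proof.
  intros Hg Hs Hp Hpn Hb t. induction t as [|t IH]; intros Ht.
  - replace (p - Z.of_nat 0)%Z with p by lia. lra.
  - set (i := (p - Z.of_nat (S t))%Z) in *.
    assert (Hi : (p - Z.of_nat t)%Z = (i + 1)%Z) by (unfold i; lia).
    rewrite Hi in IH. specialize (IH ltac:(lia)).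
    pose proof (Hs i ltac:(lia)) as He.
    pose proof (good_c k c d W i Hg) as Hci.
    destruct Hg as (Hk & Hc & HS & Hd).
    pose proof (Hd i).
    pose proof (Hb (i - d i)%Z ltac:(lia)) as Hbi. apply abs_lb in Hbi.
    pose proof (Hc i).
    pose proof (hstep_facts k Hk).
    assert (0 <= c i) by lra.
    nra.
Qed.

Lemma Rmin_nonneg a b : 0 <= a -> 0 <= b -> 0 <= Rmin a b.
Proof. unfold Rmin; destruct Rle_dec; lra. Qed.

Lemma key k c d W z n0 B n : good k c d W -> sol c d n0 z ->
  (n0 + 2 * Z.of_nat k <= n)%Z ->
  (forall j, (n0 - Z.of_nat k <= j <= n)%Z -> Rabs (z j) <= B) ->
  z (n + 1)%Z <= 11/12 * B \/ (0 <= z (n - d n)%Z /\ z (n + 1)%Z <= z n).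
Proof.
  intros Hg Hs Hn Hb.
  pose proof (fun j => good_c k c d W j Hg) as Hcb.
  pose proof Hg as (Hk & Hc & HS & Hd).
  pose proof (hstep_facts k Hk) as (Hh0 & Hh1 & Hh2).
  pose proof (window_bound k Hk) as Hwin.
  set (K := Z.of_nat k) in *.
  set (m := (n - d n)%Z).
  assert (Hm : (n - K <= m <= n)%Z) by (unfold m; pose proof (Hd n); lia).
  pose proof (Hs n ltac:(lia)) as He. fold m in He.
  assert (HB : 0 <= B) by (pose proof (Hb n ltac:(lia)); pose proof (Rabs_pos (z n)); lra).
  pose proof (abs_lb _ _ (Hb m ltac:(lia))) as Hzm.
  pose proof (Hcb n).
  destruct (Rle_dec 0 (z m)) as [Hm0|Hm0].
  { right. split; [exact Hm0|]. nra. }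
  left.
  destruct (Rle_dec (z n) 0) as [Hn0|Hn0].
  { nra. }
  destruct (crossing z m (Z.to_nat (n - m)) ltac:(lra)) as (p & Hp1 & Hp2 & Hp3).
  { rewrite Z2Nat.id by lia. replace (m + (n - m))%Z with n by lia. lra. }
  rewrite Z2Nat.id in Hp1, Hp3 by lia. replace (m + (n - m))%Z with n in Hp1, Hp3 by lia.
  set (T := fun j => W (j + 1)%Z - W (p - 1)%Z).
  assert (HT : forall j, (p - 1 <= j <= n)%Z -> T j <= 17/12).
  { intros j Hj. unfold T.
    pose proof (good_S_mono k c d W (j+1) (n+1) Hg ltac:(lia)).
    pose proof (good_S_mono k c d W m (p-1) Hg ltac:(lia)).
    pose proof (good_S_up k c d W m (n+1) Hg ltac:(lia)).
    assert (IZR (n + 1 - m) <= IZR (K + 2)) by (apply IZR_le; lia).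
    nra. }
  assert (HX : forall j, (p - 1 <= j <= n)%Z -> - z (j - d j)%Z <= B * Rmin 1 (17/12 - T j)).
  { intros j Hj. pose proof (HT j Hj). pose proof (Hd j).
    assert (0 <= Rmin 1 (17/12 - T j)) by (apply Rmin_nonneg; lra).
    destruct (Z_le_gt_dec p (j - d j)) as [Hjp|Hjp].
    - pose proof (Hp3 (j - d j)%Z ltac:(lia)). nra.
    - set (i := (j - d j)%Z) in *.
      pose proof (back k c d W z n0 B n p Hg Hs ltac:(apply Hp3; lia) ltac:(lia) Hb
                   (Z.to_nat (p - i)) ltac:(rewrite Z2Nat.id; lia)) as Hi.
      rewrite Z2Nat.id in Hi by lia. replace (p - (p - i))%Z with i in Hi by lia.
      pose proof (abs_lb _ _ (Hb i ltac:(lia))) as Hzi.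
      pose proof (good_S_up k c d W i (j+1) Hg ltac:(lia)) as Hu1.
      pose proof (good_S_up k c d W (p-1) p Hg ltac:(lia)) as Hu2.
      replace (p - (p - 1))%Z with 1%Z in Hu2 by lia.
      assert (Hu3 : IZR (j + 1 - i) <= IZR (K + 1)) by (apply IZR_le; lia).
      rewrite plus_IZR in Hwin, Hu3.
      assert (Hwp : W p - W i <= 17/12 - T j) by (unfold T in *; nra).
      unfold Rmin. destruct Rle_dec; nra. }
  assert (HF : forall t : nat, (p - 1 + Z.of_nat t <= n)%Z ->
            z (p + Z.of_nat t)%Z <= B * G (T (p - 1 + Z.of_nat t)%Z)).
  { intros t. induction t as [|t IH]; intros Ht.
    - replace (p + Z.of_nat 0)%Z with p by lia. replace (p - 1 + Z.of_nat 0)%Z with (p - 1)%Z by lia.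
      pose proof (Hs (p - 1)%Z ltac:(lia)) as Hep. replace (p - 1 + 1)%Z with p in Hep by lia.
      pose proof (HX (p - 1)%Z ltac:(lia)) as HX0.
      assert (HTc : T (p - 1)%Z = c (p - 1)%Z) by (unfold T; rewrite Hc; f_equal; f_equal; lia).
      pose proof (Hcb (p - 1)%Z).
      pose proof (G_concave 0 (T (p - 1)%Z) ltac:(lra)). rewrite G_0 in H1.
      rewrite HTc in *. nra.
    - set (j := (p + Z.of_nat t)%Z).
      replace (p + Z.of_nat (S t))%Z with (j + 1)%Z by (unfold j; lia).
      replace (p - 1 + Z.of_nat (S t))%Z with j by (unfold j; lia).
      specialize (IH ltac:(lia)). replace (p - 1 + Z.of_nat t)%Z with (j - 1)%Z in IH by (unfold j; lia).
      fold j in IH.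
      pose proof (Hs j ltac:(unfold j; lia)) as Hej.
      pose proof (HX j ltac:(unfold j; lia)) as HXj.
      assert (HTj : T j = T (j - 1)%Z + c j).
      { unfold T. rewrite Hc. replace (j - 1 + 1)%Z with j by lia. ring. }
      pose proof (Hcb j).
      pose proof (G_concave (T (j - 1)%Z) (T j) ltac:(lra)).
      rewrite HTj in *. nra. }
  pose proof (HF (Z.to_nat (n - p + 1)) ltac:(rewrite Z2Nat.id; lia)) as Hfin.
  rewrite Z2Nat.id in Hfin by lia.
  replace (p + (n - p + 1))%Z with (n + 1)%Z in Hfin by lia.
  pose proof (G_le (T (p - 1 + (n - p + 1))%Z)). nra.
Qed.

Lemma sol_opp c d n0 z : sol c d n0 z -> sol c d n0 (fun j => - z j).
Proof. intros Hs n Hn. rewrite (Hs n Hn). ring. Qed.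

Lemma sol_mono c d n0 n1 z : (n0 <= n1)%Z -> sol c d n0 z -> sol c d n1 z.
Proof. intros H Hs n Hn. apply Hs. lia. Qed.

Lemma bounded_sol k c d W z n0 B : good k c d W -> sol c d n0 z ->
  (forall j, (n0 - Z.of_nat k <= j <= n0 + 2 * Z.of_nat k)%Z -> Rabs (z j) <= B) ->
  forall j, (n0 - Z.of_nat k <= j)%Z -> Rabs (z j) <= B.
Proof.
  intros Hg Hs Hb.
  assert (HB : 0 <= B) by (pose proof (Hb n0 ltac:(lia)); pose proof (Rabs_pos (z n0)); lra).
  assert (H : forall t : nat, forall j, (n0 - Z.of_nat k <= j <= n0 + 2 * Z.of_nat k + Z.of_nat t)%Z
              -> Rabs (z j) <= B).
  { induction t as [|t IH]; intros j Hj.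
    - apply Hb. lia.
    - destruct (Z.eq_dec j (n0 + 2 * Z.of_nat k + Z.of_nat (S t))%Z) as [->|Hne].
      2:{ apply IH. lia. }
      set (n := (n0 + 2 * Z.of_nat k + Z.of_nat t)%Z).
      replace (n0 + 2 * Z.of_nat k + Z.of_nat (S t))%Z with (n + 1)%Z by (unfold n; lia).
      pose proof (key k c d W z n0 B n Hg Hs ltac:(unfold n; lia) ltac:(intros; apply IH; unfold n in *; lia)) as K1.
      pose proof (key k c d W (fun j => - z j) n0 B n Hg (sol_opp _ _ _ _ Hs) ltac:(unfold n; lia)
                 ltac:(intros; cbv beta; rewrite Rabs_Ropp; apply IH; unfold n in *; lia)) as K2.
      simpl in K2.
      pose proof (abs_lb _ _ (IH n ltac:(unfold n; lia))).
      apply Rabs_le. destruct K1, K2; lra. }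
  intros j Hj. apply (H (Z.to_nat (j - n0))). lia.
Qed.

Lemma contract k c d W z n0 B : good k c d W -> sol c d n0 z ->
  (forall j, (n0 - Z.of_nat k <= j)%Z -> Rabs (z j) <= B) ->
  forall n, (n0 + 6 * Z.of_nat k <= n)%Z -> z (n + 1)%Z <= 11/12 * B.
Proof.
  intros Hg Hs Hb n Hn.
  pose proof (fun j => good_c k c d W j Hg) as Hcb.
  pose proof Hg as (Hk & Hc & HS & Hd).
  pose proof (hstep_facts k Hk) as (Hh0 & Hh1 & Hh2).
  assert (HB : 0 <= B) by (pose proof (Hb n0 ltac:(lia)); pose proof (Rabs_pos (z n0)); lra).
  set (K := Z.of_nat k) in *.
  set (A := (n0 + 2 * K)%Z).
  destruct (Rle_dec (z (n + 1)%Z) (11/12 * B)) as [Hle|Hgt]; [exact Hle|exfalso].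
  assert (Hkey : forall j, (A <= j)%Z ->
     z (j + 1)%Z <= 11/12 * B \/ (0 <= z (j - d j)%Z /\ z (j + 1)%Z <= z j)).
  { intros j Hj. apply (key k c d W z n0 B j Hg Hs ltac:(unfold A in Hj; lia)).
    intros; apply Hb; lia. }
  assert (H1 : forall t : nat, (Z.of_nat t <= n + 1 - A)%Z -> z (n + 1 - Z.of_nat t)%Z >= z (n + 1)%Z).
  { induction t as [|t IH]; intros Ht.
    - replace (n + 1 - Z.of_nat 0)%Z with (n + 1)%Z by lia. lra.
    - set (j := (n - Z.of_nat t)%Z).
      specialize (IH ltac:(lia)). replace (n + 1 - Z.of_nat t)%Z with (j + 1)%Z in IH by (unfold j; lia).
      replace (n + 1 - Z.of_nat (S t))%Z with j by (unfold j; lia).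
      destruct (Hkey j ltac:(unfold j; lia)) as [Hc1|[_ Hc1]]; lra. }
  assert (H2 : forall j, (A <= j <= n + 1)%Z -> z j >= z (n + 1)%Z).
  { intros j Hj. pose proof (H1 (Z.to_nat (n + 1 - j)) ltac:(lia)) as Hx.
    replace (n + 1 - Z.of_nat (Z.to_nat (n + 1 - j)))%Z with j in Hx by lia. exact Hx. }
  assert (Hpos : 0 < z (n + 1)%Z) by nra.
  assert (H3 : forall t : nat, (A + K + Z.of_nat t <= n + 1)%Z ->
     z (A + K + Z.of_nat t)%Z <= B - INR t * (2/3 * hstep k) * z (n + 1)%Z).
  { induction t as [|t IH]; intros Ht.
    - simpl INR. pose proof (abs_lb _ _ (Hb (A + K + Z.of_nat 0)%Z ltac:(unfold A; lia))). lra.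
    - set (j := (A + K + Z.of_nat t)%Z) in *.
      specialize (IH ltac:(lia)).
      replace (A + K + Z.of_nat (S t))%Z with (j + 1)%Z by (unfold j; lia).
      pose proof (Hs j ltac:(unfold j, A; lia)) as Hej.
      pose proof (Hd j).
      pose proof (H2 (j - d j)%Z ltac:(unfold j, K in *; lia)).
      pose proof (Hcb j). rewrite S_INR. nra. }
  pose proof (H3 (Z.to_nat (n + 1 - A - K)) ltac:(lia)) as Hf.
  replace (A + K + Z.of_nat (Z.to_nat (n + 1 - A - K)))%Z with (n + 1)%Z in Hf by lia.
  assert (Ht : 3 * INR k <= INR (Z.to_nat (n + 1 - A - K))).
  { replace 3 with (INR 3) by (simpl; lra). rewrite <- mult_INR. apply le_INR.
    unfold A, K in *. lia. }
  assert (2 <= INR (Z.to_nat (n + 1 - A - K)) * (2/3 * hstep k)) by nra.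
  nra.
Qed.

Lemma contract_abs k c d W z n0 B : good k c d W -> sol c d n0 z ->
  (forall j, (n0 - Z.of_nat k <= j)%Z -> Rabs (z j) <= B) ->
  forall j, (n0 + 6 * Z.of_nat k + 1 <= j)%Z -> Rabs (z j) <= 11/12 * B.
Proof.
  intros Hg Hs Hb j Hj.
  pose proof (contract k c d W z n0 B Hg Hs Hb (j - 1) ltac:(lia)) as C1.
  pose proof (contract k c d W (fun j => - z j) n0 B Hg (sol_opp _ _ _ _ Hs)
     ltac:(intros; cbv beta; rewrite Rabs_Ropp; apply Hb; lia) (j - 1) ltac:(lia)) as C2.
  cbv beta in C2. replace (j - 1 + 1)%Z with j in C1, C2 by lia.
  apply Rabs_le; lra.
Qed.

Lemma decay k c d W z n0 B : good k c d W -> sol c d n0 z ->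
  (forall j, (n0 - Z.of_nat k <= j)%Z -> Rabs (z j) <= B) ->
  forall m : nat, forall j, (n0 + Z.of_nat m * (7 * Z.of_nat k + 1) - Z.of_nat k <= j)%Z ->
    Rabs (z j) <= (11/12) ^ m * B.
Proof.
  intros Hg Hs Hb m. induction m as [|m IH]; intros j Hj.
  - simpl. rewrite Rmult_1_l. apply Hb. lia.
  - set (n1 := (n0 + Z.of_nat m * (7 * Z.of_nat k + 1))%Z).
    assert (Hn1 : (n0 <= n1)%Z) by (unfold n1; nia).
    pose proof (contract_abs k c d W z n1 ((11/12)^m * B) Hg (sol_mono _ _ _ _ _ Hn1 Hs)
       ltac:(intros; apply IH; unfold n1 in *; lia) j ltac:(unfold n1; rewrite Nat2Z.inj_succ in Hj; nia)) as H.
    simpl. lra.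
Qed.

Lemma crude k c d W z n0 delta : good k c d W -> sol c d n0 z ->
  (forall j, (n0 - Z.of_nat k <= j <= n0)%Z -> Rabs (z j) <= delta) ->
  forall t : nat, forall j, (n0 - Z.of_nat k <= j <= n0 + Z.of_nat t)%Z -> Rabs (z j) <= 2 ^ t * delta.
Proof.
  intros Hg Hs Hb t.
  pose proof (fun j => good_c k c d W j Hg) as Hcb.
  pose proof Hg as (Hk & Hc & HS & Hd).
  pose proof (hstep_facts k Hk) as (Hh0 & Hh1 & Hh2).
  induction t as [|t IH]; intros j Hj.
  - simpl. rewrite Rmult_1_l. apply Hb. lia.
  - destruct (Z_le_gt_dec j (n0 + Z.of_nat t)) as [Hle|Hgt].
    + pose proof (IH j ltac:(lia)).
      assert (0 <= 2 ^ t * delta) by (pose proof (Rabs_pos (z j)); lra).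
      simpl. lra.
    + set (n := (n0 + Z.of_nat t)%Z) in *.
      replace j with (n + 1)%Z by (unfold n in *; lia).
      rewrite (Hs n ltac:(unfold n; lia)).
      pose proof (Hd n). pose proof (Hcb n).
      pose proof (IH n ltac:(unfold n; lia)) as I1.
      pose proof (IH (n - d n)%Z ltac:(unfold n in *; lia)) as I2.
      pose proof (Rabs_triang (z n) (- (c n * z (n - d n)%Z))) as Tr.
      rewrite Rabs_Ropp, Rabs_mult, (Rabs_right (c n)) in Tr by lra.
      pose proof (Rabs_pos (z (n - d n)%Z)).
      simpl. unfold Rminus. nra.
Qed.

Definition Sc (k : nat) (j : Z) : R := IZR j * hstep k - cos (IZR j * hstep k) / 3.

Lemma good_concrete k : (32 <= k)%nat -> good k (coef k) (delay k) (Sc k).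
Proof.
  intros Hk. pose proof (hstep_facts k Hk) as (Hh0 & Hh1 & Hh2).
  split; [exact Hk|]. split; [|split].
  - intros j. unfold coef, Sc. rewrite plus_IZR. rewrite Rmult_plus_distr_r. lra.
  - intros a b Hab. unfold Sc.
    pose proof (cos_lip (IZR b * hstep k) (IZR a * hstep k)) as Hl.
    assert (Hab2 : IZR a <= IZR b) by (apply IZR_le; lia). assert (Hba : 0 <= IZR b - IZR a) by lra.
    rewrite <- Rmult_minus_distr_r, Rabs_mult, (Rabs_right (hstep k)), (Rabs_right (IZR b - IZR a)) in Hl by lra.
    rewrite minus_IZR. apply abs_lb in Hl. nra.
  - intros j. unfold delay, floorZ.
    set (r := Rabs (cos (IZR j * hstep k)) / hstep k).
    assert (Hr : 0 <= r <= INR k).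
    { unfold r. pose proof (COS_bound (IZR j * hstep k)).
      pose proof (Rabs_pos (cos (IZR j * hstep k))).
      assert (Rabs (cos (IZR j * hstep k)) <= 1) by (apply Rabs_le; lra).
      split.
      - unfold Rdiv; apply Rmult_le_pos; [lra | left; apply Rinv_0_lt_compat; lra].
      - apply Rmult_le_reg_r with (hstep k); [lra|]. unfold Rdiv. rewrite Rmult_assoc, Rinv_l by lra. lra. }
    pose proof (base_Int_part r) as [B1 B2].
    split.
    + assert (-1 < Int_part r)%Z by (apply lt_IZR; lra). lia.
    + apply le_IZR. rewrite <- INR_IZR_INZ. lra.
Qed.

Lemma global_bound k n0 z delta : (32 <= k)%nat -> is_sol k n0 z ->
  (forall j, (n0 - Z.of_nat k <= j <= n0)%Z -> Rabs (z j) <= delta) ->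
  forall j, (n0 - Z.of_nat k <= j)%Z -> Rabs (z j) <= 2 ^ (2 * k) * delta.
Proof.
  intros Hk Hs Hb.
  pose proof (good_concrete k Hk) as Hg.
  apply (bounded_sol k _ _ _ z n0 _ Hg Hs).
  intros j Hj. apply (crude k _ _ _ z n0 delta Hg Hs Hb (2 * k)). lia.
Qed.

Lemma part1 k : (32 <= k)%nat -> unif_asympt_stable k.
Proof.
  intros Hk.
  assert (Hp : 0 < 2 ^ (2 * k)) by (apply pow_lt; lra).
  split.
  - intros eps Heps. exists (eps / (2 * 2 ^ (2 * k))). split.
    + apply Rdiv_lt_0_compat; lra.
    + intros n0 z Hn0 Hs Hi n Hn.
      assert (Hi' : forall j, (n0 - Z.of_nat k <= j <= n0)%Z -> Rabs (z j) <= eps / (2 * 2 ^ (2 * k))).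
      { intros j Hj. left. apply Hi. exact Hj. }
      pose proof (global_bound k n0 z _ Hk Hs Hi' n ltac:(lia)) as H.
      replace (2 ^ (2 * k) * (eps / (2 * 2 ^ (2 * k)))) with (eps / 2) in H by (field; lra).
      lra.
  - exists 1. split; [lra|]. intros eps Heps.
    destruct (pow_lt_1_zero (11/12) ltac:(rewrite Rabs_right; lra) (eps / 2 ^ (2 * k))
      ltac:(apply Rdiv_lt_0_compat; lra)) as [M HM].
    exists (M * (7 * k + 1))%nat.
    intros n0 z Hn0 Hs Hi n Hn.
    assert (Hi' : forall j, (n0 - Z.of_nat k <= j <= n0)%Z -> Rabs (z j) <= 1).
    { intros j Hj. left. apply Hi. exact Hj. }
    pose proof (global_bound k n0 z _ Hk Hs Hi') as HB.
    pose proof (decay k _ _ _ z n0 _ (good_concrete k Hk) Hs HB M n ltac:(nia)) as H.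
    pose proof (HM M (le_n M)) as H2.
    rewrite Rabs_right in H2 by (apply Rle_ge, pow_le; lra).
    apply Rmult_lt_compat_r with (r := 2 ^ (2 * k)) in H2; [|lra].
    replace (eps / 2 ^ (2 * k) * 2 ^ (2 * k)) with eps in H2 by (field; lra).
    lra.
Qed.

Lemma cont_from_eps f s :
  (forall e, 0 < e -> exists dl, 0 < dl /\ forall u, Rabs (u - s) < dl -> Rabs (f u - f s) < e) ->
  continuity_pt f s.
Proof.
  intros H. unfold continuity_pt, continue_in, limit1_in, limit_in. intros e He.
  destruct (H e He) as [dl [Hdl Hu]]. exists dl. split; [exact Hdl|].
  intros u [_ Hd]. simpl in *. unfold R_dist in *. apply Hu. exact Hd.
Qed.

Lemma eps_from_cont f s : continuity_pt f s ->
  forall e, 0 < e -> exists dl, 0 < dl /\ forall u, Rabs (u - s) < dl -> Rabs (f u - f s) < e.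
Proof.
  intros H e He. unfold continuity_pt, continue_in, limit1_in, limit_in in H.
  destruct (H e He) as [dl [Hdl Hu]]. exists dl. split; [exact Hdl|].
  intros u Hd. destruct (Req_dec u s) as [->|Hne].
  - rewrite Rminus_diag, Rabs_R0. exact He.
  - apply (Hu u). split; [split; [exact I| auto]|]. exact Hd.
Qed.

Lemma dde_cont_pos phi x t : is_dde_sol phi x -> 0 < t -> continuity_pt x t.
Proof.
  intros (H1 & H2 & H3) Ht. apply derivable_continuous_pt.
  exact (exist _ _ (H3 t Ht)).
Qed.

Lemma within_cont phi x T : cont_on_m10 phi -> is_dde_sol phi x -> 0 < T ->
  forall s, -1 <= s <= T -> forall e, 0 < e -> exists dl, 0 < dl /\
    forall u, -1 <= u <= T -> Rabs (u - s) < dl -> Rabs (x u - x s) < e.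
Proof.
  intros Hphi Hx HT s Hs e He.
  pose proof Hx as (Hx1 & Hx2 & Hx3).
  destruct (Rle_dec s 0) as [Hs0|Hs0].
  - destruct (Hphi s ltac:(lra) (e/2) ltac:(lra)) as [d1 [Hd1 Hp1]].
    destruct (Hx2 (e/2) ltac:(lra)) as [d2 [Hd2 Hp2]].
    exists (Rmin d1 d2). split; [apply Rmin_pos; lra|].
    intros u Hu Hus. pose proof (Rmin_l d1 d2). pose proof (Rmin_r d1 d2).
    rewrite (Hx1 s ltac:(lra)).
    destruct (Rle_dec u 0) as [Hu0|Hu0].
    + rewrite (Hx1 u ltac:(lra)). assert (Rabs (phi u - phi s) < e / 2) by (apply Hp1; lra). lra.
    + assert (Hus' : Rabs (u - s) = u - s) by (apply Rabs_right; lra).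
      rewrite Hus' in Hus.
      pose proof (Hp2 u ltac:(lra)) as A1.
      pose proof (Hp1 0 ltac:(lra) ltac:(rewrite Rabs_right; lra)) as A2.
      rewrite <- (Hx1 0 ltac:(lra)) in A2.
      pose proof (Rabs_triang (x u - x 0) (x 0 - phi s)).
      replace (x u - x 0 + (x 0 - phi s)) with (x u - phi s) in H1 by ring.
      lra.
  - destruct (eps_from_cont x s (dde_cont_pos phi x s Hx ltac:(lra)) e He) as [dl [Hdl Hp]].
    exists dl. split; [exact Hdl|]. intros u _ Hu. apply Hp. exact Hu.
Qed.

Definition clamp (T u : R) : R := Rmax (-1) (Rmin u T).

Lemma clamp_in T u : -1 <= T -> -1 <= clamp T u <= T.
Proof. intros H. unfold clamp, Rmax, Rmin. repeat destruct Rle_dec; lra. Qed.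

Lemma clamp_id T u : -1 <= u <= T -> clamp T u = u.
Proof. intros H. unfold clamp, Rmax, Rmin. repeat destruct Rle_dec; lra. Qed.

Lemma clamp_lip T u v : -1 <= T -> Rabs (clamp T u - clamp T v) <= Rabs (u - v).
Proof.
  intros H. unfold clamp, Rmax, Rmin. repeat destruct Rle_dec;
  unfold Rabs; repeat destruct Rcase_abs; lra.
Qed.

Lemma unif_cont phi x T : cont_on_m10 phi -> is_dde_sol phi x -> 0 < T ->
  forall e, 0 < e -> exists dl, 0 < dl /\
    forall u v, -1 <= u <= T -> -1 <= v <= T -> Rabs (u - v) < dl -> Rabs (x u - x v) < e.
Proof.
  intros Hphi Hx HT e He.
  set (y := fun u => x (clamp T u)).
  assert (Hc : forall s, continuity_pt y s).
  { intros s. apply cont_from_eps. intros e' He'.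
    destruct (within_cont phi x T Hphi Hx HT (clamp T s) (clamp_in T s ltac:(lra)) e' He')
      as [dl [Hdl Hp]].
    exists dl. split; [exact Hdl|]. intros u Hu. unfold y. apply Hp.
    - apply clamp_in; lra.
    - pose proof (clamp_lip T u s ltac:(lra)). lra. }
  pose proof (Heine y (fun c => -1 <= c <= T) (compact_P3 (-1) T) (fun s _ => Hc s)) as HU.
  destruct (HU (mkposreal e He)) as [[dl Hdl] Hp]. simpl in Hp.
  exists dl. split; [exact Hdl|]. intros u v Hu Hv Huv.
  pose proof (Hp u v Hu Hv Huv). unfold y in H.
  rewrite !clamp_id in H by lra. exact H.
Qed.

Lemma cont_x_nonneg phi x T : cont_on_m10 phi -> is_dde_sol phi x -> 0 < T ->
  forall s, 0 <= s <= T -> continuity_pt x s.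
Proof.
  intros Hphi Hx HT s Hs.
  destruct (Rlt_dec 0 s) as [Hp|Hp].
  - apply (dde_cont_pos phi x s Hx Hp).
  - assert (s = 0) by lra. subst s. apply cont_from_eps. intros e He.
    destruct (within_cont phi x T Hphi Hx HT 0 ltac:(lra) e He) as [dl [Hdl Hq]].
    exists (Rmin dl (Rmin 1 T)). split.
    + apply Rmin_pos; [lra|apply Rmin_pos; lra].
    + intros u Hu. pose proof (Rmin_l dl (Rmin 1 T)). pose proof (Rmin_r dl (Rmin 1 T)).
      pose proof (Rmin_l 1 T). pose proof (Rmin_r 1 T).
      rewrite Rminus_0_r in Hu. apply Rabs_def2 in Hu.
      apply Hq; [lra|]. rewrite Rminus_0_r. apply Rabs_def1; lra.
Qed.

Lemma dA c : derivable_pt_lim (fun s => s - cos s / 3) c (1 + sin c / 3).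
Proof.
  replace (1 + sin c / 3) with (1 - (- sin c * / 3 + cos c * 0)) by field.
  change (fun s => s - cos s / 3) with (minus_fct id (mult_fct cos (fct_cte (/3)))).
  apply derivable_pt_lim_minus.
  - apply derivable_pt_lim_id.
  - apply (derivable_pt_lim_mult cos (fct_cte (/3))).
    + apply derivable_pt_lim_cos.
    + apply derivable_pt_lim_const.
Qed.

Lemma dAv v c : derivable_pt_lim (fun s => (s - cos s / 3) * v) c ((1 + sin c / 3) * v).
Proof.
  replace ((1 + sin c / 3) * v) with ((1 + sin c / 3) * v + (c - cos c / 3) * 0) by field.
  apply (derivable_pt_lim_mult (fun s => s - cos s / 3) (fct_cte v)).
  - apply dA.
  - apply derivable_pt_lim_const.
Qed.

Lemma dG x v c l : derivable_pt_lim x c l ->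
  derivable_pt_lim (fun s => x s + (s - cos s / 3) * v) c (l + (1 + sin c / 3) * v).
Proof.
  intros H.
  change (fun s => x s + (s - cos s / 3) * v) with (plus_fct x (fun s => (s - cos s / 3) * v)).
  apply derivable_pt_lim_plus; [exact H|]. apply dAv.
Qed.

Lemma hpos k : (1 <= k)%nat -> 0 < hstep k /\ INR k * hstep k = 1.
Proof.
  intros Hk. assert (H1: 1 <= INR k).
  { replace 1 with (INR 1) by (simpl; lra). apply le_INR; lia. }
  unfold hstep. split.
  - apply Rdiv_lt_0_compat; lra.
  - field. lra.
Qed.

Lemma delay_facts k j : (1 <= k)%nat ->
  (0 <= delay k j <= Z.of_nat k)%Z /\
  IZR (delay k j) * hstep k <= Rabs (cos (IZR j * hstep k)) < (IZR (delay k j) + 1) * hstep k.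
Proof.
  intros Hk. destruct (hpos k Hk) as [Hh0 Hh1].
  unfold delay, floorZ.
  set (cj := Rabs (cos (IZR j * hstep k))).
  set (r := cj / hstep k).
  assert (Hcj : 0 <= cj <= 1).
  { unfold cj. pose proof (COS_bound (IZR j * hstep k)).
    pose proof (Rabs_pos (cos (IZR j * hstep k))).
    split; [lra|]. apply Rabs_le; lra. }
  assert (Hrc : r * hstep k = cj) by (unfold r; field; lra).
  assert (Hr : 0 <= r <= INR k).
  { split.
    - unfold r, Rdiv; apply Rmult_le_pos; [lra | left; apply Rinv_0_lt_compat; lra].
    - apply Rmult_le_reg_r with (hstep k); [lra|]. lra. }
  pose proof (base_Int_part r) as [B1 B2].
  split; [split|].
  - assert (-1 < Int_part r)%Z by (apply lt_IZR; lra). lia.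
  - apply le_IZR. rewrite <- INR_IZR_INZ. lra.
  - rewrite <- Hrc. split.
    + apply Rmult_le_compat_r; lra.
    + apply Rmult_lt_compat_r; lra.
Qed.

Lemma coef_eq k j : coef k j = Sc k (j + 1) - Sc k j.
Proof. unfold coef, Sc. rewrite plus_IZR. rewrite Rmult_plus_distr_r. lra. Qed.

Lemma coef_bnd k j : (1 <= k)%nat -> 0 <= coef k j <= 4/3 * hstep k.
Proof.
  intros Hk. destruct (hpos k Hk) as [Hh0 Hh1].
  unfold coef. rewrite plus_IZR, Rmult_plus_distr_r, Rmult_1_l.
  pose proof (cos_lip (IZR j * hstep k + hstep k) (IZR j * hstep k)) as Hl.
  replace (IZR j * hstep k + hstep k - IZR j * hstep k) with (hstep k) in Hl by ring.
  rewrite (Rabs_right (hstep k)) in Hl by lra. apply abs_lb in Hl. lra.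
Qed.

Lemma local_err phi x T k n e' dl : cont_on_m10 phi -> is_dde_sol phi x -> 0 < T -> (1 <= k)%nat ->
  (forall u v, -1 <= u <= T -> -1 <= v <= T -> Rabs (u - v) < dl -> Rabs (x u - x v) < e') ->
  3 * hstep k < dl -> (0 <= n)%Z -> IZR (n + 1) * hstep k <= T ->
  Rabs (x (IZR (n + 1) * hstep k) - x (IZR n * hstep k)
        + coef k n * x (IZR (n - delay k n) * hstep k)) <= 4/3 * hstep k * e'.
Proof.
  intros Hphi Hx HT Hk HU Hdl Hn Hb.
  destruct (hpos k Hk) as [Hh0 Hh1].
  pose proof Hx as (Hx1 & Hx2 & Hx3).
  pose proof (delay_facts k n Hk) as ([Hd0 Hd1] & Hd2 & Hd3).
  set (h := hstep k) in *.
  set (d := delay k n) in *.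
  set (a := IZR n * h).
  set (b := IZR (n + 1) * h) in *.
  assert (Hba : b = a + h) by (unfold a, b; rewrite plus_IZR; ring).
  assert (Ha0 : 0 <= a) by (unfold a; apply Rmult_le_pos; [apply IZR_le; lia | lra]).
  set (u1 := IZR (n - d) * h).
  set (v := x u1).
  set (Gf := fun s => x s + (s - cos s / 3) * v).
  set (df := fun s => - (1 + sin s / 3) * x (s - Rabs (cos s)) + (1 + sin s / 3) * v).
  assert (Hmin : Rmin a b = a) by (apply Rmin_left; lra).
  assert (Hmax : Rmax a b = b) by (apply Rmax_right; lra).
  pose proof (Coquelicot.Derive.MVT_gen Gf a b df) as HM. cbv zeta in HM.
  rewrite Hmin, Hmax in HM.
  destruct HM as [c [Hc HGc]].
  - intros s Hs. apply Coquelicot.Derive.is_derive_Reals. unfold Gf, df.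
    apply dG. apply Hx3. lra.
  - intros s Hs. unfold Gf.
    change (fun s0 => x s0 + (s0 - cos s0 / 3) * v) with (plus_fct x (fun s0 => (s0 - cos s0 / 3) * v)).
    apply continuity_pt_plus.
    + apply (cont_x_nonneg phi x T Hphi Hx HT). lra.
    + apply derivable_continuous_pt. exact (exist _ _ (dAv v s)).
  - unfold Gf, df in HGc.
    assert (Hcoef : coef k n = (b - cos b / 3) - (a - cos a / 3)).
    { rewrite coef_eq. unfold Sc, a, b, h. reflexivity. }
    rewrite Hcoef.
    replace (x b - x a + ((b - cos b / 3) - (a - cos a / 3)) * v)
      with ((1 + sin c / 3) * (v - x (c - Rabs (cos c))) * (b - a)) by (cbv beta in HGc; lra).
    rewrite Hba. replace (a + h - a) with h by ring.
    assert (Hu1 : u1 = a - IZR d * h) by (unfold u1, a; rewrite minus_IZR; ring).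
    assert (HIZRk : IZR d * h <= 1).
    { assert (IZR d <= INR k) by (rewrite INR_IZR_INZ; apply IZR_le; lia). nra. }
    assert (HdZ : 0 <= IZR d) by (apply IZR_le; lia).
    pose proof (COS_bound c) as Hcb.
    assert (Hcc : Rabs (cos c) <= 1) by (apply Rabs_le; lra).
    pose proof (Rabs_pos (cos c)).
    pose proof (cos_lip c a) as Hl.
    pose proof (Rabs_triang_inv (cos c) (cos a)) as Ht1.
    pose proof (Rabs_triang_inv (cos a) (cos c)) as Ht2.
    rewrite (Rabs_right (c - a)) in Hl by lra.
    rewrite (Rabs_minus_sym (cos a) (cos c)) in Ht2.
    fold a in Hd2, Hd3.
    assert (Hdist : Rabs (v - x (c - Rabs (cos c))) < e').
    { unfold v. apply HU.
      - rewrite Hu1. assert (0 <= IZR d * h) by nra. split; lra.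
      - split; lra.
      - rewrite Hu1. apply Rabs_def1; lra. }
    assert (Hs : Rabs (1 + sin c / 3) <= 4/3).
    { pose proof (SIN_bound c). apply Rabs_le; lra. }
    rewrite !Rabs_mult, (Rabs_right h) by lra.
    pose proof (Rabs_pos (1 + sin c / 3)).
    pose proof (Rabs_pos (v - x (c - Rabs (cos c)))).
    assert (Rabs (1 + sin c / 3) * Rabs (v - x (c - Rabs (cos c))) <= 4/3 * e')
      by (apply Rmult_le_compat; lra).
    nra.
Qed.

Lemma pow_exp q n : 0 <= q -> (1 + q) ^ n <= exp (INR n * q).
Proof.
  intros Hq. induction n as [|n IH].
  - simpl. rewrite Rmult_0_l, exp_0. lra.
  - rewrite S_INR. replace ((INR n + 1) * q) with (q + INR n * q) by ring.
    rewrite exp_plus. simpl. pose proof (exp_ineq1_le q).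
    apply Rmult_le_compat; try lra. apply pow_le. lra.
Qed.

Lemma gron phi x T k z e' dl : cont_on_m10 phi -> is_dde_sol phi x -> 0 < T -> (1 <= k)%nat ->
  (forall u v, -1 <= u <= T -> -1 <= v <= T -> Rabs (u - v) < dl -> Rabs (x u - x v) < e') ->
  3 * hstep k < dl -> 0 < e' -> is_sol k 0 z ->
  (forall j : Z, (- Z.of_nat k <= j <= 0)%Z -> z j = phi (IZR j * hstep k)) ->
  forall n : nat, INR n * hstep k <= T -> forall j, (- Z.of_nat k <= j <= Z.of_nat n)%Z ->
  Rabs (x (IZR j * hstep k) - z j) <= ((1 + 4/3 * hstep k) ^ n - 1) * e'.
Proof.
  intros Hphi Hx HT Hk HU Hdl He Hs Hi.
  destruct (hpos k Hk) as [Hh0 Hh1].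
  pose proof Hx as (Hx1 & Hx2 & Hx3).
  set (h := hstep k) in *.
  set (q := 4/3 * h).
  induction n as [|n IH]; intros Hn j Hj.
  - replace ((1 + q) ^ 0 - 1) with 0 by (simpl; lra). rewrite Rmult_0_l. simpl in Hj.
    rewrite (Hi j ltac:(lia)).
    assert (IZR j <= 0) by (apply IZR_le; lia).
    assert (- INR k <= IZR j) by (rewrite INR_IZR_INZ, <- opp_IZR; apply IZR_le; lia).
    rewrite (Hx1 (IZR j * h)) by nra.
    rewrite Rminus_diag, Rabs_R0. lra.
  - assert (Hn' : INR n * h <= T) by (rewrite S_INR in Hn; lra).
    specialize (IH Hn').
    assert (Hp1 : 1 <= (1 + q) ^ n) by (apply pow_R1_Rle; unfold q; lra).
    set (beta := ((1 + q) ^ n - 1) * e') in *.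
    assert (Hbeta : 0 <= beta) by (unfold beta; nra).
    assert (Hgoal : beta * (1 + q) + q * e' = ((1 + q) ^ S n - 1) * e') by (unfold beta; simpl; ring).
    destruct (Z_le_gt_dec j (Z.of_nat n)) as [Hle|Hgt].
    + pose proof (IH j ltac:(lia)). unfold q in *. nra.
    + set (m := Z.of_nat n) in *.
      replace j with (m + 1)%Z by (rewrite Nat2Z.inj_succ in Hj; lia).
      pose proof (delay_facts k m Hk) as ([Hd0 Hd1] & _ & _).
      pose proof (coef_bnd k m Hk) as Hcb. fold h in Hcb.
      assert (Hm1 : IZR (m + 1) * h <= T).
      { replace (IZR (m + 1)) with (INR (S n)) by (rewrite INR_IZR_INZ, Nat2Z.inj_succ; reflexivity). exact Hn. }
      pose proof (local_err phi x T k m e' dl Hphi Hx HT Hk HU Hdl ltac:(unfold m; lia) Hm1) as HL.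
      fold h in HL.
      rewrite (Hs m ltac:(unfold m; lia)).
      pose proof (IH m ltac:(unfold m; lia)) as I1.
      pose proof (IH (m - delay k m)%Z ltac:(unfold m in *; lia)) as I2.
      set (L := x (IZR (m + 1) * h) - x (IZR m * h) + coef k m * x (IZR (m - delay k m) * h)) in *.
      replace (x (IZR (m + 1) * h) - (z m - coef k m * z (m - delay k m)%Z))
        with (L + (x (IZR m * h) - z m) - coef k m * (x (IZR (m - delay k m) * h) - z (m - delay k m)%Z))
        by (unfold L; ring).
      pose proof (Rabs_triang (L + (x (IZR m * h) - z m)) (- (coef k m * (x (IZR (m - delay k m) * h) - z (m - delay k m)%Z)))) as T1.
      pose proof (Rabs_triang L (x (IZR m * h) - z m)) as T2.
      rewrite Rabs_Ropp, Rabs_mult, (Rabs_right (coef k m)) in T1 by lra.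
      unfold Rminus at 1.
      pose proof (Rabs_pos (x (IZR (m - delay k m) * h) - z (m - delay k m)%Z)).
      assert (coef k m * Rabs (x (IZR (m - delay k m) * h) - z (m - delay k m)%Z) <= q * beta)
        by (apply Rmult_le_compat; unfold q; lra).
      unfold q in *. nra.
Qed.

Lemma part2 (phi x : R -> R) : cont_on_m10 phi -> is_dde_sol phi x ->
     forall t, 0 < t -> forall eps, 0 < eps ->
       exists K : nat, forall k : nat, (1 <= k)%nat -> (K <= k)%nat ->
         forall zeta : Z -> R, is_sol k 0 zeta ->
           (forall j : Z, (- Z.of_nat k <= j <= 0)%Z ->
              zeta j = phi (IZR j * hstep k)) ->
           Rabs (x t - zeta (floorZ (t / hstep k))) < eps.
Proof.
  intros Hphi Hx t Ht eps Heps.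
  set (C := exp (4/3 * t)).
  assert (HC : 1 <= C) by (unfold C; pose proof (exp_ineq1_le (4/3 * t)); lra).
  set (e' := eps / (C + 1)).
  assert (He' : 0 < e') by (unfold e'; apply Rdiv_lt_0_compat; lra).
  destruct (unif_cont phi x t Hphi Hx Ht e' He') as [dl [Hdl HU]].
  exists (Z.to_nat (up (4 / dl))).
  intros k Hk1 HkK z Hs Hi.
  destruct (hpos k Hk1) as [Hh0 Hh1].
  destruct (archimed (4 / dl)) as [Ha1 _].
  assert (H4dl : 0 < 4 / dl) by (apply Rdiv_lt_0_compat; lra).
  assert (Hk : 4 / dl < INR k).
  { assert (IZR (up (4 / dl)) <= INR k).
    { rewrite INR_IZR_INZ. apply IZR_le.
      assert (0 < up (4 / dl))%Z by (apply lt_IZR; lra). lia. }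
    lra. }
  assert (Hh4 : 4 * hstep k < dl).
  { assert (4 < INR k * dl).
    { apply Rmult_lt_reg_r with (/ dl). apply Rinv_0_lt_compat; lra.
      rewrite Rmult_assoc, Rinv_r by lra. unfold Rdiv in Hk. lra. }
    nra. }
  unfold floorZ.
  set (h := hstep k) in *.
  set (N := Int_part (t / h)).
  pose proof (base_Int_part (t / h)) as [B1 B2]. fold N in B1, B2.
  assert (Hth : t / h * h = t) by (field; lra).
  assert (HN0 : (0 <= N)%Z).
  { assert (0 < t / h) by (apply Rdiv_lt_0_compat; lra).
    assert (-1 < N)%Z by (apply lt_IZR; lra). lia. }
  assert (HNh : IZR N * h <= t) by (rewrite <- Hth; apply Rmult_le_compat_r; lra).
  assert (HNh2 : t - IZR N * h < h).
  { assert (t / h < IZR N + 1) by lra.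
    assert (t / h * h < (IZR N + 1) * h) by (apply Rmult_lt_compat_r; lra). lra. }
  set (n := Z.to_nat N).
  assert (HnN : INR n = IZR N) by (unfold n; rewrite INR_IZR_INZ, Z2Nat.id by lia; reflexivity).
  pose proof (gron phi x t k z e' dl Hphi Hx Ht Hk1 HU ltac:(fold h; lra) He' Hs Hi n
                ltac:(fold h; rewrite HnN; lra) N ltac:(unfold n; lia)) as HG.
  fold h in HG.
  assert (Hpow : (1 + 4/3 * h) ^ n <= C).
  { eapply Rle_trans. apply pow_exp. lra.
    unfold C. rewrite HnN.
    destruct (Req_dec (IZR N * (4/3 * h)) (4/3 * t)) as [E|E].
    - rewrite E. lra.
    - left. apply exp_increasing. nra. }
  assert (HN1 : -1 <= IZR N * h) by (assert (0 <= IZR N) by (apply IZR_le; lia); nra).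
  pose proof (HU t (IZR N * h) ltac:(lra) ltac:(lra) ltac:(rewrite Rabs_right; lra)) as H1.
  pose proof (Rabs_triang (x t - x (IZR N * h)) (x (IZR N * h) - z N)) as Tr.
  replace (x t - x (IZR N * h) + (x (IZR N * h) - z N)) with (x t - z N) in Tr by ring.
  assert (HCe : C * e' < eps).
  { unfold e'. apply Rmult_lt_reg_r with (C + 1). lra.
    replace (C * (eps / (C + 1)) * (C + 1)) with (C * eps) by (field; lra). nra. }
  nra.
Qed.

Theorem mainTheorem6 :
  (exists K : nat, forall k : nat, (1 <= k)%nat -> (K <= k)%nat ->
     unif_asympt_stable k) /\
  (forall (phi x : R -> R), cont_on_m10 phi -> is_dde_sol phi x ->
     forall t, 0 < t -> forall eps, 0 < eps ->
       exists K : nat, forall k : nat, (1 <= k)%nat -> (K <= k)%nat ->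
         forall zeta : Z -> R, is_sol k 0 zeta ->
           (forall j : Z, (- Z.of_nat k <= j <= 0)%Z ->
              zeta j = phi (IZR j * hstep k)) ->
           Rabs (x t - zeta (floorZ (t / hstep k))) < eps).
Proof.
  split.
  - exists 32%nat. intros k _ Hk. apply part1. exact Hk.
  - exact part2.
Qed.
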